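(* Let $n,k$ be integers with $2\le k\le n/2$ and let $P$ be a Gutkin $(n,k)$-gon with vertices $v_0,\dots,v_{n-1}$. Then for every $i$, the interior angles of $P$ at the vertices $v_i$ and $v_{i+k-1}$ are equal (indices modulo $n$).
   Context: Let $P$ be a convex $n$-gon in the Euclidean plane with vertices $v_0,\dots,v_{n-1}$ in their cyclic (counterclockwise) order, indices taken modulo $n$. $P$ is a Gutkin $(n,k)$-gon if there exists an angle $\alpha$ such that for every $i$, $\angle v_{i+1}v_iv_{i+k}=\angle v_{i+k-1}v_{i+k}v_i=\alpha$, where $\angle abc$ denotes the angle at $b$ between the segments $ba$ and $bc$. *)

(* Defs.v *)
From Stdlib Require Import Reals Lra Lia Arith.
Open Scope R_scope.

Definition point := (R * R)%type.

Definition dot (a b : point) : R := fst a * fst b + snd a * snd b.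
Definition vsub (a b : point) : point := (fst a - fst b, snd a - snd b).
Definition norm (a : point) : R := sqrt (dot a a).
Definition cross3 (a b c : point) : R :=
  (fst b - fst a) * (snd c - snd a) - (snd b - snd a) * (fst c - fst a).

Definition angle (a b c : point) : R :=
  acos (dot (vsub a b) (vsub c b) / (norm (vsub a b) * norm (vsub c b))).

Definition vert (n : nat) (v : nat -> point) (i : nat) : point := v (i mod n)%nat.

Definition convex_ccw_polygon (n : nat) (v : nat -> point) : Prop :=
  (3 <= n)%nat /\
  forall i j : nat, (i < n)%nat -> (j < n)%nat ->
    j <> i -> j <> ((i + 1) mod n)%nat ->
    0 < cross3 (v i) (v ((i + 1) mod n)%nat) (v j).

Definition gutkin (n k : nat) (v : nat -> point) : Prop :=
  convex_ccw_polygon n v /\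
  exists alpha : R, forall i : nat,
    angle (vert n v (i + 1)) (vert n v i) (vert n v (i + k)) = alpha /\
    angle (vert n v (i + k - 1)) (vert n v (i + k)) (vert n v i) = alpha.

Definition interior_angle (n : nat) (v : nat -> point) (i : nat) : R :=
  angle (vert n v (i + n - 1)) (vert n v i) (vert n v (i + 1)).

(* Main.v *)
Require Import Defs.
From Stdlib Require Import Reals Arith.
From Stdlib Require Import Lra Lia Psatz.
Open Scope R_scope.

Definition ff (t : R) : R := t / sqrt (t * t + 1).
Definition cotv (a b c : point) : R := dot (vsub a b) (vsub c b) / cross3 b a c.

Lemma sq_pos (t : R) : 0 < sqrt (t * t + 1).
Proof. apply sqrt_lt_R0. nra. Qed.

Lemma sq_sq (t : R) : sqrt (t * t + 1) * sqrt (t * t + 1) = t * t + 1.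
Proof. apply sqrt_sqrt. nra. Qed.

Lemma angle_f (a b c : point) : 0 < cross3 b a c -> angle a b c = acos (ff (cotv a b c)).
Proof.
  intro HX. unfold angle, ff, cotv, norm.
  set (t := dot (vsub a b) (vsub c b) / cross3 b a c).
  assert (E : sqrt (dot (vsub a b) (vsub a b)) * sqrt (dot (vsub c b) (vsub c b))
              = cross3 b a c * sqrt (t * t + 1)).
  { rewrite <- sqrt_mult.
    2: { unfold dot; nra. } 2: { unfold dot; nra. }
    replace (dot (vsub a b) (vsub a b) * dot (vsub c b) (vsub c b))
      with ((cross3 b a c * cross3 b a c) * (t * t + 1)).
    2: { unfold t. destruct a as [ax ay], b as [bx by_], c as [cx cy].
         unfold dot, vsub, cross3 in *; simpl in *. field; lra. }
    rewrite sqrt_mult; [| nra | nra]. rewrite sqrt_square; lra. }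
  rewrite E. f_equal. pose proof (sq_pos t). unfold t in *. field. split; lra.
Qed.

Lemma ff_bound (t : R) : -1 < ff t < 1.
Proof.
  unfold ff. pose proof (sq_pos t). pose proof (sq_sq t).
  set (s := sqrt (t * t + 1)) in *.
  assert (-s < t < s) by nra.
  split.
  - apply (Rmult_lt_reg_r s); [lra|]. field_simplify; lra.
  - apply (Rmult_lt_reg_r s); [lra|]. field_simplify; lra.
Qed.

Lemma ff_inj (t t' : R) : ff t = ff t' -> t = t'.
Proof.
  unfold ff. intro H.
  pose proof (sq_pos t) as P1. pose proof (sq_sq t) as Q1.
  pose proof (sq_pos t') as P2. pose proof (sq_sq t') as Q2.
  revert H P1 Q1 P2 Q2.
  generalize (sqrt (t * t + 1)) as s. generalize (sqrt (t' * t' + 1)) as s'.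
  intros s' s H P1 Q1 P2 Q2.
  assert (K1 : t * s' = t' * s).
  { apply (Rmult_eq_compat_r (s * s')) in H. field_simplify in H; lra. }
  assert (K2 : (t * s') * (t * s') = (t' * s) * (t' * s)) by (rewrite K1; ring).
  assert (K3 : t * t = t' * t').
  { replace ((t * s') * (t * s')) with (t * t * (s' * s')) in K2 by ring.
    replace ((t' * s) * (t' * s)) with (t' * t' * (s * s)) in K2 by ring.
    rewrite Q1, Q2 in K2. nra. }
  assert (K5 : (t - t') * (t + t') = 0) by nra.
  destruct (Rmult_integral _ _ K5) as [K6|K6]; [lra|].
  assert (K7 : t' = - t) by lra. rewrite K7 in K1.
  assert (K8 : t * (s' + s) = 0) by lra.
  destruct (Rmult_integral _ _ K8); lra.
Qed.

Lemma angle_eq_cot (a b c a' b' c' : point) :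
  0 < cross3 b a c -> 0 < cross3 b' a' c' ->
  angle a b c = angle a' b' c' -> cotv a b c = cotv a' b' c'.
Proof.
  intros H1 H2 H. rewrite (angle_f _ _ _ H1), (angle_f _ _ _ H2) in H.
  apply ff_inj.
  pose proof (ff_bound (cotv a b c)). pose proof (ff_bound (cotv a' b' c')).
  rewrite <- (cos_acos (ff (cotv a b c))) by lra.
  rewrite <- (cos_acos (ff (cotv a' b' c'))) by lra.
  rewrite H; reflexivity.
Qed.

Lemma cot_eq_angle (a b c a' b' c' : point) :
  0 < cross3 b a c -> 0 < cross3 b' a' c' ->
  cotv a b c = cotv a' b' c' -> angle a b c = angle a' b' c'.
Proof.
  intros H1 H2 H. rewrite (angle_f _ _ _ H1), (angle_f _ _ _ H2), H. reflexivity.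
Qed.

Lemma angle_sym (a b c : point) : angle a b c = angle c b a.
Proof.
  unfold angle. f_equal. unfold dot. rewrite (Rmult_comm (norm (vsub a b))). f_equal. ring.
Qed.

Lemma cross_cyc (a b c : point) : cross3 a b c = cross3 b c a.
Proof. unfold cross3. ring. Qed.

Lemma dist_pos (a b c : point) : 0 < cross3 a b c ->
  0 < (fst c - fst a) * (fst c - fst a) + (snd c - snd a) * (snd c - snd a).
Proof.
  intro H. destruct (Req_dec (fst c) (fst a)) as [E1|E1]; destruct (Req_dec (snd c) (snd a)) as [E2|E2].
  - exfalso. unfold cross3 in H. rewrite E1, E2 in H. lra.
  - assert (N : snd c - snd a <> 0) by lra. pose proof (Rsqr_pos_lt _ N) as P. unfold Rsqr in P. nra.
  - assert (N : fst c - fst a <> 0) by lra. pose proof (Rsqr_pos_lt _ N) as P. unfold Rsqr in P. nra.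
  - assert (N : fst c - fst a <> 0) by lra. pose proof (Rsqr_pos_lt _ N) as P. unfold Rsqr in P. nra.
Qed.

Lemma cot_cross (a b c a' b' c' : point) :
  0 < cross3 b a c -> 0 < cross3 b' a' c' ->
  (cotv a b c = cotv a' b' c' <->
   dot (vsub a b) (vsub c b) * cross3 b' a' c' = dot (vsub a' b') (vsub c' b') * cross3 b a c).
Proof.
  intros H1 H2. unfold cotv. split; intro H.
  - apply (Rmult_eq_compat_r (cross3 b a c * cross3 b' a' c')) in H.
    field_simplify in H; lra.
  - apply (Rmult_eq_reg_r (cross3 b a c * cross3 b' a' c')); [| nra].
    field_simplify; lra.
Qed.

Lemma algebra (A B Bp Cm C D : point) :
  0 < cross3 B Bp D -> 0 < cross3 C A Cm -> 0 < cross3 A B C -> 0 < cross3 D B C ->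
  0 < cross3 B Bp A -> 0 < cross3 C D Cm ->
  cotv Bp B D = cotv A C Cm -> cotv B A C = cotv B D C ->
  cotv Bp B A = cotv D C Cm.
Proof.
  intros X1 X2 X3 X4 XQ XQ' E12 E34.
  apply cot_cross in E12; auto. apply cot_cross in E34; auto. apply cot_cross; auto.
  pose proof (dist_pos _ _ _ X1) as S1.
  rewrite cross_cyc in X2. pose proof (dist_pos _ _ _ X2) as S2.
  revert E12 E34 S1 S2.
  destruct A as [ax ay], B as [bx by_], Bp as [px py], Cm as [mx my], C as [cx cy], D as [dx dy].
  unfold dot, vsub, cross3 in *; simpl in *.
  intros E12 E34 S1 S2.
  assert (HS : 0 < ((dx - bx) * (dx - bx) + (dy - by_) * (dy - by_)) *
      ((ax - cx) * (ax - cx) + (ay - cy) * (ay - cy))) by nra.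
  assert (Id : (((dx - cx) * (mx - cx) + (dy - cy) * (my - cy)) *
                ((px - bx) * (ay - by_) - (py - by_) * (ax - bx))
              - ((dx - cx) * (my - cy) - (dy - cy) * (mx - cx)) *
                ((px - bx) * (ax - bx) + (py - by_) * (ay - by_))) *
     (((dx - bx) * (dx - bx) + (dy - by_) * (dy - by_)) *
      ((ax - cx) * (ax - cx) + (ay - cy) * (ay - cy)))
     = (((ax - cx) * (mx - cx) + (ay - cy) * (my - cy)) * ((px - bx) * (dx - bx) + (py - by_) * (dy - by_))
        + ((ax - cx) * (my - cy) - (ay - cy) * (mx - cx)) * ((px - bx) * (dy - by_) - (py - by_) * (dx - bx)))
       * (((bx - ax) * (cx - ax) + (by_ - ay) * (cy - ay)) * ((bx - dx) * (cy - dy) - (by_ - dy) * (cx - dx))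
          - ((bx - ax) * (cy - ay) - (by_ - ay) * (cx - ax)) * ((bx - dx) * (cx - dx) + (by_ - dy) * (cy - dy)))
     + (((ax - cx) * (mx - cx) + (ay - cy) * (my - cy)) * ((px - bx) * (dy - by_) - (py - by_) * (dx - bx))
        - ((ax - cx) * (my - cy) - (ay - cy) * (mx - cx)) * ((px - bx) * (dx - bx) + (py - by_) * (dy - by_)))
       * (((bx - ax) * (cx - ax) + (by_ - ay) * (cy - ay)) * ((bx - dx) * (cx - dx) + (by_ - dy) * (cy - dy))
          + ((bx - ax) * (cy - ay) - (by_ - ay) * (cx - ax)) * ((bx - dx) * (cy - dy) - (by_ - dy) * (cx - dx)))).
  { ring. }
  rewrite <- E12, E34 in Id.
  assert (Z : (((dx - cx) * (mx - cx) + (dy - cy) * (my - cy)) *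
                ((px - bx) * (ay - by_) - (py - by_) * (ax - bx))
              - ((dx - cx) * (my - cy) - (dy - cy) * (mx - cx)) *
                ((px - bx) * (ax - bx) + (py - by_) * (ay - by_))) *
     (((dx - bx) * (dx - bx) + (dy - by_) * (dy - by_)) *
      ((ax - cx) * (ax - cx) + (ay - cy) * (ay - cy))) = 0).
  { rewrite Id. ring. }
  destruct (Rmult_integral _ _ Z); lra.
Qed.

Lemma modcase (x n : nat) : (0 < n)%nat -> (x < 2 * n)%nat ->
  (x mod n = x /\ x < n)%nat \/ (x mod n = x - n /\ n <= x)%nat.
Proof.
  intros Hn Hx. destruct (Nat.lt_ge_cases x n) as [H|H].
  - left. split; [apply Nat.mod_small|]; lia.
  - right. split; [|lia].
    replace x with ((x - n) + 1 * n)%nat at 1 by lia.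
    rewrite Nat.Div0.mod_add. apply Nat.mod_small. lia.
Qed.

Lemma modne (r a b n : nat) : (r < n)%nat -> (a < n)%nat -> (b < n)%nat -> a <> b ->
  ((r + a) mod n <> (r + b) mod n)%nat.
Proof.
  intros Hr Ha Hb Hab.
  assert (C1 := modcase (r + a) n ltac:(lia) ltac:(lia)).
  assert (C2 := modcase (r + b) n ltac:(lia) ltac:(lia)).
  destruct C1 as [[E1 F1]|[E1 F1]]; destruct C2 as [[E2 F2]|[E2 F2]];
  rewrite E1, E2; lia.
Qed.

Theorem mainTheorem9 (n k : nat) (v : nat -> point) :
  (2 <= k)%nat -> (2 * k <= n)%nat ->
  gutkin n k v ->
  forall i : nat,
    interior_angle n v i = interior_angle n v (i + k - 1).
Proof.
  intros Hk Hkn [[Hn Hconv] [alpha Hal]] i.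
  assert (Hn0 : n <> 0%nat) by lia.
  set (r := (i mod n)%nat).
  assert (Hr : (r < n)%nat) by (apply Nat.mod_upper_bound; lia).
  set (P := fun t => v ((r + t) mod n)%nat).
  assert (vs : forall x t, x = (i + t)%nat -> vert n v x = P t).
  { intros x t ->. unfold vert, P, r. rewrite Nat.Div0.add_mod_idemp_l. reflexivity. }
  assert (Pn : forall t, P (n + t)%nat = P t).
  { intro t. unfold P. replace (r + (n + t))%nat with (r + t + 1 * n)%nat by lia.
    rewrite Nat.Div0.mod_add. reflexivity. }
  assert (conv : forall a b, (a < n)%nat -> (b < n)%nat -> b <> a ->
            ((r + b) mod n <> (r + (a + 1)) mod n)%nat ->
            0 < cross3 (P a) (P (a + 1)%nat) (P b)).
  { intros a b Ha Hb H1 H2. unfold P.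
    assert (E : (((r + a) mod n + 1) mod n = (r + (a + 1)) mod n)%nat).
    { rewrite Nat.Div0.add_mod_idemp_l. f_equal. lia. }
    rewrite <- E. apply Hconv.
    - apply Nat.mod_upper_bound; lia.
    - apply Nat.mod_upper_bound; lia.
    - apply modne; lia.
    - rewrite E. exact H2. }
  destruct (Hal i) as [H1 H4].
  destruct (Hal (i + n - 1)%nat) as [H3 H2].
  rewrite (vs (i + 1)%nat 1%nat) in H1 by lia.
  rewrite (vs i 0%nat) in H1 by lia.
  rewrite (vs (i + k)%nat k) in H1 by lia.
  rewrite (vs (i + k - 1)%nat (k - 1)%nat) in H4 by lia.
  rewrite (vs (i + k)%nat k) in H4 by lia.
  rewrite (vs i 0%nat) in H4 by lia.
  rewrite (vs (i + n - 1 + 1)%nat (n + 0)%nat), Pn in H3 by lia.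
  rewrite (vs (i + n - 1)%nat (n - 1)%nat) in H3 by lia.
  rewrite (vs (i + n - 1 + k)%nat (n + (k - 1))%nat), Pn in H3 by lia.
  rewrite (vs (i + n - 1 + k - 1)%nat (n + (k - 2))%nat), Pn in H2 by lia.
  rewrite (vs (i + n - 1 + k)%nat (n + (k - 1))%nat), Pn in H2 by lia.
  rewrite (vs (i + n - 1)%nat (n - 1)%nat) in H2 by lia.
  unfold interior_angle.
  rewrite (vs (i + n - 1)%nat (n - 1)%nat) by lia.
  rewrite (vs i 0%nat) by lia.
  rewrite (vs (i + 1)%nat 1%nat) by lia.
  rewrite (vs (i + k - 1 + n - 1)%nat (n + (k - 2))%nat), Pn by lia.
  rewrite (vs (i + k - 1)%nat (k - 1)%nat) by lia.
  rewrite (vs (i + k - 1 + 1)%nat k) by lia.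
  assert (X1 : 0 < cross3 (P 0%nat) (P 1%nat) (P k)).
  { apply (conv 0%nat k); try lia. apply modne; lia. }
  assert (X4 : 0 < cross3 (P k) (P 0%nat) (P (k - 1)%nat)).
  { rewrite <- cross_cyc.
    assert (H := conv (k - 1)%nat 0%nat ltac:(lia) ltac:(lia) ltac:(lia)
                  ltac:(apply modne; lia)).
    replace (k - 1 + 1)%nat with k in H by lia. exact H. }
  assert (X3 : 0 < cross3 (P (n - 1)%nat) (P 0%nat) (P (k - 1)%nat)).
  { assert (H := conv (n - 1)%nat (k - 1)%nat ltac:(lia) ltac:(lia) ltac:(lia)).
    replace (n - 1 + 1)%nat with (n + 0)%nat in H by lia. rewrite Pn in H. apply H.
    replace (r + (n + 0))%nat with (r + 0 + 1 * n)%nat by lia.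
    rewrite Nat.Div0.mod_add. apply modne; lia. }
  assert (X2 : 0 < cross3 (P (k - 1)%nat) (P (n - 1)%nat) (P (k - 2)%nat)).
  { rewrite <- cross_cyc.
    assert (H := conv (k - 2)%nat (n - 1)%nat ltac:(lia) ltac:(lia) ltac:(lia)
                  ltac:(apply modne; lia)).
    replace (k - 2 + 1)%nat with (k - 1)%nat in H by lia. exact H. }
  assert (XQ : 0 < cross3 (P 0%nat) (P 1%nat) (P (n - 1)%nat)).
  { apply (conv 0%nat (n - 1)%nat); try lia. apply modne; lia. }
  assert (XQ' : 0 < cross3 (P (k - 1)%nat) (P k) (P (k - 2)%nat)).
  { rewrite <- cross_cyc.
    assert (H := conv (k - 2)%nat k ltac:(lia) ltac:(lia) ltac:(lia)
                  ltac:(apply modne; lia)).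
    replace (k - 2 + 1)%nat with (k - 1)%nat in H by lia. exact H. }
  rewrite angle_sym in H4. rewrite angle_sym in H2.
  rewrite (angle_sym (P (n - 1)%nat)). rewrite (angle_sym (P (k - 2)%nat)).
  assert (E12 : cotv (P 1%nat) (P 0%nat) (P k) = cotv (P (n - 1)%nat) (P (k - 1)%nat) (P (k - 2)%nat)).
  { apply angle_eq_cot; auto. congruence. }
  assert (E34 : cotv (P 0%nat) (P (n - 1)%nat) (P (k - 1)%nat) = cotv (P 0%nat) (P k) (P (k - 1)%nat)).
  { apply angle_eq_cot; auto. congruence. }
  apply cot_eq_angle; auto.
  apply algebra; auto.
Qed.
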